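(* Let $R$ be a ring, $M$ a left $R$-module and $P$ a submodule of $M$. If $P$ is strongly irreducible in $M$ or $P$ is strongly hollow in $M$, then $\mathrm{Hom}_R(P/(P\cap Q),Q/(P\cap Q))=0$ for every submodule $Q$ of $M$.
   Context: $P$ is strongly irreducible in $M$ if for all submodules $K,L$ of $M$, $K\cap L\subseteq P$ implies $K\subseteq P$ or $L\subseteq P$. $P$ is strongly hollow in $M$ if for all submodules $K,L$ of $M$, $P\subseteq K+L$ implies $P\subseteq K$ or $P\subseteq L$. *)

(* Defs.v *)
From HB Require Import structures.
From mathcomp Require Import all_boot all_order all_algebra.
Set Implicit Arguments.
Unset Strict Implicit.
Unset Printing Implicit Defensive.
Import GRing.Theory.
Local Open Scope ring_scope.

Section SubModule.
Variables (R : pzRingType) (V : lmodType R) (S : submodClosed V).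

Inductive subm : predArgType := Subm (u : V) of u \in S.
Definition submval (w : subm) : V := let: Subm u _ := w in u.
HB.instance Definition _ := [isSub of subm for submval].
HB.instance Definition _ := [Choice of subm by <:].
HB.instance Definition _ := [SubChoice_isSubLmodule of subm by <:].
End SubModule.

(* Elements are canonical representatives of the cosets x + K.        *)
Section QuotModule.
Variables (R : pzRingType) (V : lmodType R) (K : submodClosed V).

Definition eqm (x y : V) := x - y \in K.

Lemma eqm_refl x : eqm x x.
Proof. by rewrite /eqm subrr rpred0. Qed.
Lemma eqm_sym x y : eqm x y -> eqm y x.
Proof. by rewrite /eqm => h; have := rpredZ (-1) h; rewrite scaleN1r opprB. Qed.
Lemma eqm_trans x y z : eqm x y -> eqm y z -> eqm x z.
Proof.
by rewrite /eqm => h1 h2; have := rpredD h1 h2; rewrite addrA subrK.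
Qed.
Lemma eqmD x y x' y' : eqm x x' -> eqm y y' -> eqm (x + y) (x' + y').
Proof.
rewrite /eqm => h1 h2; have := rpredD h1 h2.
by rewrite opprD addrACA.
Qed.
Lemma eqmN x y : eqm x y -> eqm (- x) (- y).
Proof. by rewrite /eqm => h; have := rpredZ (-1) h; rewrite scaleN1r opprD. Qed.
Lemma eqmZ a x y : eqm x y -> eqm (a *: x) (a *: y).
Proof. by rewrite /eqm => h; rewrite -scalerBr; exact: rpredZ. Qed.

Lemma rep_ex (x : V) : exists y, eqm x y.
Proof. by exists x; apply: eqm_refl. Qed.
Definition rep (x : V) : V := xchoose (rep_ex x).

Lemma repP x : eqm x (rep x).
Proof. exact: (xchooseP (rep_ex x)). Qed.
Lemma rep_eq x y : eqm x y -> rep x = rep y.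
Proof.
move=> h; apply: eq_xchoose => z; apply/idP/idP => hz.
  exact: eqm_trans (eqm_sym h) hz.
exact: eqm_trans h hz.
Qed.
Lemma rep_idem x : rep (rep x) = rep x.
Proof. by apply: rep_eq; apply: eqm_sym; apply: repP. Qed.

Definition quotm := {x : V | rep x == x}.
HB.instance Definition _ := Choice.on quotm.

Definition qpi (x : V) : quotm := exist _ (rep x) (introT eqP (rep_idem x)).

Lemma qpiE x y : eqm x y -> qpi x = qpi y.
Proof. by move=> h; apply: val_inj => /=; apply: rep_eq. Qed.
Lemma qpi_val (a : quotm) : qpi (val a) = a.
Proof. by apply: val_inj => /=; apply/eqP; case: a. Qed.
Lemma val_qpi x : eqm (val (qpi x)) x.
Proof. by apply: eqm_sym; apply: repP. Qed.

Definition qzero := qpi 0.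
Definition qopp (a : quotm) := qpi (- val a).
Definition qadd (a b : quotm) := qpi (val a + val b).
Definition qscale (r : R) (a : quotm) := qpi (r *: val a).

Lemma qaddA : associative qadd.
Proof.
move=> a b c; apply: qpiE.
apply: (@eqm_trans _ (val a + (val b + val c))).
  by apply: eqmD; [apply: eqm_refl | apply: val_qpi].
rewrite addrA; apply: eqm_sym.
by apply: eqmD; [apply: val_qpi | apply: eqm_refl].
Qed.
Lemma qaddC : commutative qadd.
Proof. by move=> a b; rewrite /qadd addrC. Qed.
Lemma qadd0 : left_id qzero qadd.
Proof.
move=> a; rewrite -[RHS]qpi_val; apply: qpiE.
rewrite -[X in eqm _ X]add0r.
by apply: eqmD; [apply: val_qpi | apply: eqm_refl].
Qed.
Lemma qaddN : left_inverse qzero qopp qadd.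
Proof.
move=> a; apply: qpiE; apply: (@eqm_trans _ (- val a + val a)).
  by apply: eqmD; [apply: val_qpi | apply: eqm_refl].
by rewrite addNr; apply: eqm_refl.
Qed.

HB.instance Definition _ := GRing.isZmodule.Build quotm qaddA qaddC qadd0 qaddN.

Lemma qscaleA a b v : qscale a (qscale b v) = qscale (a * b) v.
Proof.
apply: qpiE; rewrite -scalerA; apply: eqmZ; exact: val_qpi.
Qed.
Lemma qscale1 : left_id 1 qscale.
Proof. by move=> v; rewrite /qscale scale1r qpi_val. Qed.
Lemma qscaleDr : right_distributive qscale +%R.
Proof.
move=> r u v; rewrite /GRing.add /= /qadd; apply: qpiE.
apply: (@eqm_trans _ (r *: (val u + val v))).
  by apply: eqmZ; apply: val_qpi.
rewrite scalerDr; apply: eqm_sym.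
by apply: eqmD; apply: val_qpi.
Qed.
Lemma qscaleDl v : {morph qscale^~ v : a b / a + b}.
Proof.
move=> a b; rewrite /GRing.add /= /qadd /qscale; apply: qpiE.
rewrite scalerDl; apply: eqm_sym.
by apply: eqmD; apply: val_qpi.
Qed.

HB.instance Definition _ :=
  GRing.Zmodule_isLmodule.Build R quotm qscaleA qscale1 qscaleDr qscaleDl.
End QuotModule.

(* For submodules P, Q of M: the submodule P ∩ Q of the module P.      *)
Section Restrict.
Variables (R : pzRingType) (M : lmodType R) (P Q : submodClosed M).

Definition restr : {pred subm P} := [pred x : subm P | val x \in Q].
Arguments restr : clear implicits.

Lemma restr_closed : GRing.subsemimod_closed restr.
Proof.
split; [split|].
- by rewrite inE /= rpred0.
- by move=> x y; rewrite !inE /= => hx hy; rewrite rpredD.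
- by move=> a x; rewrite !inE /= => hx; exact: rpredZ.
Qed.
HB.instance Definition _ := GRing.isSubmodClosed.Build R (subm P) restr
  restr_closed.
End Restrict.
Arguments restr {R M} P Q.

Section Strong.
Variables (R : pzRingType) (M : lmodType R).

Definition strongly_irreducible (P : submodClosed M) : Prop :=
  forall K L : submodClosed M,
    {subset [predI K & L] <= P} -> {subset K <= P} \/ {subset L <= P}.

Definition in_sum (K L : {pred M}) (x : M) : Prop :=
  exists k l, [/\ k \in K, l \in L & x = k + l].

Definition strongly_hollow (P : submodClosed M) : Prop :=
  forall K L : submodClosed M,
    (forall x, x \in P -> in_sum K L x) -> {subset P <= K} \/ {subset P <= L}.
End Strong.

(* Main.v *)
Require Import Defs.
From HB Require Import structures.
From mathcomp Require Import all_boot all_order all_algebra.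
From mathcomp Require Import boolp.
Local Open Scope ring_scope.
Import GRing.Theory.

Section QLemmas.
Variables (R : pzRingType) (V : lmodType R) (K : submodClosed V).

Lemma qpi0 : qpi K 0 = 0.
Proof. by []. Qed.

Lemma qpiD x y : qpi K (x + y) = qpi K x + qpi K y.
Proof.
apply: qpiE; apply: eqmD; apply: eqm_sym; apply: val_qpi.
Qed.

Lemma qpiZ a x : qpi K (a *: x) = a *: qpi K x.
Proof.
apply: qpiE; apply: eqmZ; apply: eqm_sym; apply: val_qpi.
Qed.

Lemma qpi_eq0 x : qpi K x = 0 <-> x \in K.
Proof.
split.
  move=> h; have : eqm K (val (qpi K x)) (val (qpi K 0)) by rewrite h; exact: eqm_refl.
  move=> h2.
  have h3 := eqm_trans (eqm_sym (val_qpi K x)) (eqm_trans h2 (val_qpi K 0)).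
  by move: h3; rewrite /eqm subr0.
move=> hx; rewrite -qpi0; apply: qpiE; by rewrite /eqm subr0.
Qed.
End QLemmas.

Section Mem.
Variables (R : pzRingType) (V : lmodType R) (S : submodClosed V).
Lemma memD x y : x \in S -> y \in S -> x + y \in S.
Proof. by move=> hx hy; apply: rpredD. Qed.
Lemma memN x : x \in S -> - x \in S.
Proof. by move=> hx; rewrite -scaleN1r; apply: rpredZ. Qed.
Lemma memB x y : x \in S -> y \in S -> x - y \in S.
Proof. by move=> hx hy; apply: memD => //; apply: memN. Qed.
End Mem.

Section G.
Variables (R : pzRingType) (M : lmodType R) (P Q : submodClosed M)
  (f : {linear quotm (restr P Q) -> quotm (restr Q P)}).

Definition Gp : {pred M} := fun x =>
  `[< exists (p : subm P) (q : subm Q),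
        x = val p - val q /\ f (qpi _ p) = qpi _ q >].

Lemma Gp_closed : GRing.subsemimod_closed Gp.
Proof.
split; [split|].
- apply/asboolP; exists 0, 0; split; first by rewrite subr0.
  by rewrite qpi0 raddf0.
- move=> x y /asboolP [p1 [q1 [-> e1]]] /asboolP [p2 [q2 [-> e2]]].
  apply/asboolP; exists (p1 + p2), (q1 + q2); split.
    by rewrite /= opprD addrACA.
  by rewrite !qpiD raddfD; congr (_ + _); [exact: e1 | exact: e2].
- move=> a x /asboolP [p1 [q1 [-> e1]]].
  apply/asboolP; exists (a *: p1), (a *: q1); split.
    by rewrite /= scalerBr.
  by rewrite !qpiZ linearZ; congr (_ *: _); exact: e1.
Qed.
HB.instance Definition _ := GRing.isSubmodClosed.Build R M Gp Gp_closed.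
End G.
Arguments Gp {R M P Q} f.

Theorem lemma2p11 (R : pzRingType) (M : lmodType R) (P : submodClosed M) :
  strongly_irreducible P \/ strongly_hollow P ->
  forall (Q : submodClosed M)
         (f : {linear quotm (restr P Q) -> quotm (restr Q P)}),
    forall x, f x = 0.
Proof.
move=> H Q f x.
set p : subm P := val x.
have xE : x = qpi _ p by rewrite qpi_val.
set q : subm Q := val (f x).
have fE : f (qpi _ p) = qpi _ q by rewrite -xE qpi_val.
rewrite xE fE; apply/qpi_eq0; rewrite inE /=.
case: H => [HI | HH].
- have sub : {subset [predI Gp f & Q] <= P}.
    move=> y /andP [/asboolP [p1 [q1 [-> e1]]] hy].
    have hp1 : val p1 \in Q by rewrite -(subrK (val q1) (val p1)); apply: memD => //; exact: (valP q1).
    have : qpi (restr P Q) p1 = 0 by apply/qpi_eq0.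
    move=> h0; rewrite h0 raddf0 in e1.
    have hq1 : val q1 \in P by have := (proj1 (qpi_eq0 _ _ _ _) (esym e1)).
    by apply: memB => //; exact: (valP p1).
  case: (HI _ _ sub) => [hG | hQ].
  + have hg : val p - val q \in Gp f by apply/asboolP; exists p, q.
    have := hG _ hg => hpq.
    have -> : val q = val p - (val p - val q) by rewrite opprB addrCA subrr addr0.
    by apply: memB => //; exact: (valP p).
  + exact: hQ _ (valP q).
- have cov : forall y, y \in P -> in_sum (Gp f) Q y.
    move=> y hy; pose p0 : subm P := Subm hy.
    pose q0 : subm Q := val (f (qpi _ p0)).
    exists (y - val q0), (val q0); split; last by rewrite subrK.
      apply/asboolP; exists p0, q0; split => //.
      by rewrite qpi_val.
    exact: (valP q0).
  case: (HH _ _ cov) => [hG | hQ].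
  + have := hG _ (valP p) => /asboolP [p1 [q1 [e e1]]].
    have hq1 : val q1 \in P.
      have -> : val q1 = val p1 - val p by rewrite e opprB addrCA subrr addr0.
      by apply: memB; [exact: (valP p1) | exact: (valP p)].
    have e2 : qpi (restr Q P) q1 = 0 by apply/qpi_eq0.
    have e3 : qpi (restr P Q) p = qpi _ p1.
      apply: qpiE; rewrite /eqm inE /=.
      rewrite e addrAC subrr add0r; apply: memN; exact: (valP q1).
    have e4 : qpi (restr Q P) q = 0 by rewrite -fE e3 e1 e2.
    by have := proj1 (qpi_eq0 _ _ _ _) e4.
  + have e4 : qpi (restr P Q) p = 0 by apply/qpi_eq0; rewrite inE /= hQ // (valP p).
    have e5 : qpi (restr Q P) q = 0 by rewrite -fE e4 raddf0.
    by have := proj1 (qpi_eq0 _ _ _ _) e5.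
Qed.
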